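(* Let $G\leq\mathrm{Sym}(n)$ be a Frobenius group with Frobenius complement $H$ and Frobenius kernel $K$, so $G=KH$. Then the derangement graph $\Gamma_G$ is the disjoint union of $|H|$ copies of the complete graph on $n$ vertices.
   Context: A transitive permutation group $G\leq\mathrm{Sym}(n)$ is a Frobenius group if no non-identity element fixes more than one point and some non-identity element fixes a point. A Frobenius complement is a non-trivial proper subgroup $H$ with $H\cap g^{-1}Hg=\{\mathrm{id}\}$ for all $g\in G\setminus H$. The Frobenius kernel is $K=\left(G\setminus\bigcup_{g\in G}g^{-1}Hg\right)\cup\{\mathrm{id}\}$. The derangement graph $\Gamma_G$ has vertex set $G$, with $\sigma,\pi$ adjacent iff $\sigma\pi^{-1}$ is a derangement (has no fixed point in $\{1,\dots,n\}$). *)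

(* Defs.v *)
From mathcomp Require Import all_boot all_fingroup.
Set Implicit Arguments. Unset Strict Implicit. Unset Printing Implicit Defensive.
Local Open Scope group_scope.

Definition derangement n (g : {perm 'I_n}) : bool := [forall i, g i != i].

Definition fixpts n (g : {perm 'I_n}) : {set 'I_n} := [set i | g i == i].

Definition frobenius_perm n (G : {group {perm 'I_n}}) : Prop :=
  [/\ [transitive G, on [set: 'I_n] | 'P],
      (forall g, g \in G -> g != 1 -> #|fixpts g| <= 1)
    & exists2 g, g \in G & (g != 1) && (fixpts g != set0)].

Definition frobenius_complement n (G H : {group {perm 'I_n}}) : Prop :=
  [/\ H \proper G, H :!=: 1
    & forall g, g \in G :\: H -> H :&: (H :^ g) = 1].

(* Frobenius kernel (given for reference; not needed in the statement). *)
Definition frobenius_kernel n (G H : {group {perm 'I_n}}) : {set {perm 'I_n}} :=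
  (G :\: \bigcup_(g in G) (H :^ g)) :|: [set 1].

Definition derangement_adj n (s t : {perm 'I_n}) : bool := derangement (s * t^-1).

(* Main.v *)
Require Import Defs.
From mathcomp Require Import all_boot all_fingroup.
From mathcomp Require Import all_solvable all_algebra all_character.
Set Implicit Arguments. Unset Strict Implicit. Unset Printing Implicit Defensive.
Local Open Scope group_scope.
Import GRing.Theory.
Section Fpf.
Variables (gT : finGroupType) (r : nat) (V P C : {group gT}).
Hypotheses (abelV : r.-abelem V) (ntV : V :!=: 1%g).
Hypotheses (nVF : (P <*> C)%G \subset 'N(V)%g).

Local Notation F := (P <*> C)%G.
Local Notation rG := (abelem_repr abelV ntV nVF).
Local Notation ErV := (abelem_rV abelV ntV).
Local Notation rV_E := (rVabelem abelV ntV).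

Lemma fpf_sum0 (S : {group gT}) t (u : 'rV['F_r]_(abelem_dim' V).+1) :
  S \subset F -> t \in S -> ('C_V[t] = 1)%g ->
  (u *m \sum_(s in S) rG s = 0)%R.
Proof.
move=> sSF St cVt; set w := (u *m _)%R.
have Ft : t \in F := subsetP sSF t St.
have wt : (w *m rG t = w)%R.
  rewrite /w -mulmxA mulmx_suml; congr (_ *m _)%R.
  rewrite [RHS](reindex_inj (mulIg t)) /=.
  apply: eq_big => [s | s Ss]; first by rewrite groupMr.
  have Ss' : s \in S.
    by move: Ss; rewrite ?groupMr.
  by rewrite repr_mxM // (subsetP sSF).
have : rV_E w \in 'C_V[t].
  rewrite inE mem_rVabelem /=; apply/cent1P/commgP/conjg_fixP.
  by rewrite -(rVabelemJ abelV ntV nVF) // wt.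
rewrite cVt inE => /eqP w1.
by rewrite -(rVabelemK abelV ntV w) w1 morph1.
Qed.


Lemma fpf_contra :
  C \subset 'N(P) -> P :&: C = 1 -> P :!=: 1 -> C :!=: 1 ->
  {in F, forall x, x != 1 -> 'C_V[x] = 1} ->
  {in C, forall c, c != 1 -> 'C_P[c] = 1} ->
  ~~ (r %| #|P|) -> False.
Proof.
move=> nPC tiPC ntP ntC regF regC rP.
have [r_pr _ _] := pgroup_pdiv (abelem_pgroup abelV) ntV.
have sPF : P \subset F := joing_subl P C.
have sCF : C \subset F := joing_subr P C.
have [x Vx ntx] := trivgPn _ ntV.
pose u := ErV x.
have nzu : u != 0%R.
  apply: contra ntx => /eqP u0; apply/eqP.
  apply: (@abelem_rV_inj _ _ _ abelV ntV _ _ Vx (group1 V)).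
  by rewrite -/u u0 abelem_rV_1.
have [t Pt ntt] := trivgPn _ ntP.
have Ft : t \in F := subsetP sPF t Pt.
have cVt := regF t Ft ntt.
have h0F := fpf_sum0 u (subxx F) Ft cVt.
have h0P := fpf_sum0 u sPF Pt cVt.
have [c Cc ntc] := trivgPn _ ntC.
have hC y : y \in P -> (u *m \sum_(s in C) rG (s ^ y)%g = 0)%R.
  move=> Py; have Fy : y \in F := subsetP sPF y Py.
  have sCyF : C :^ y \subset F by rewrite sub_conjg conjGid ?groupV.
  have Ccy : c ^ y \in C :^ y by rewrite memJ_conjg.
  have := fpf_sum0 u sCyF Ccy (regF _ (subsetP sCyF _ Ccy) _).
  rewrite conjg_eq1 => /(_ ntc).
  by rewrite /conjugate big_imset //= => a b _ _; apply: conjg_inj.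
pose h := fun p : gT * gT => p.2 ^ p.1.
have injh : {in setX P (C :\ 1) &, injective h}.
  case=> [y1 c1] [y2 c2]; rewrite !inE /h /= => /andP[Py1 /andP[_ Cc1]] /andP[Py2 /andP[nt2 Cc2]] E.
  have Ez : c1 = c2 ^ (y2 * y1^-1) by rewrite conjgM -E conjgK.
  have Pz : y2 * y1^-1 \in P by rewrite groupM ?groupV.
  have comm1 : [~ c2, y2 * y1^-1] = 1.
    have : [~ c2, y2 * y1^-1] \in P :&: C.
      rewrite inE; apply/andP; split.
        by rewrite commgEr groupM // memJ_norm ?groupV // (subsetP nPC).
      by rewrite commgEl -Ez groupM ?groupV.
    by rewrite tiPC => /set1P.
  have : y2 * y1^-1 \in 'C_P[c2].
    by rewrite inE Pz; apply/cent1P; apply/esym/commgP/eqP.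
  rewrite regC // => /set1P/eqP; rewrite mulg_eq1 => /eqP yE.
  have y12 : y1 = y2 by rewrite yE invgK.
  by move: E; rewrite y12 => /conjg_inj ->.
have imh : h @: setX P (C :\ 1) = F :\: P.
  apply/eqP; rewrite eqEcard; apply/andP; split.
    apply/subsetP=> _ /imsetP[[y c'] /setXP[Py /setD1P[ntc' Cc']] ->].
    rewrite /h /= inE (groupJ (subsetP sCF _ Cc') (subsetP sPF _ Py)) andbT.
    apply: contra ntc' => Pc'; apply/eqP.
    have : c' \in P :&: C.
      by rewrite inE Cc' andbT -(conjgK y c') groupJ ?groupV.
    by rewrite tiPC => /set1P.
  have cC : #|C :\ 1| = #|C| - 1 by rewrite (cardsD1 1 C) group1 add1n subn1.
  rewrite card_in_imset // cardsX cC cardsD (setIidPr sPF).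
  by rewrite /= norm_joinEr // TI_cardMg // mulnBr muln1.
have E : (\sum_(f in F) rG f = \sum_(f in P) rG f
          + \sum_(y in P) (\sum_(s in C) rG (s ^ y)%g - 1%:M))%R.
  rewrite (big_setID P) (setIidPr sPF) /=; congr (_ + _)%R.
  rewrite -imh big_imset //=.
  under [RHS]eq_bigr => y Py do rewrite (big_setD1 1 (group1 C)) /= conj1g repr_mx1 addrC addrK.
  rewrite pair_big /=; apply: eq_bigl => -[y s].
  by rewrite in_setX.
have : (u *m \sum_(f in F) rG f = - (u *+ #|P|))%R.
  rewrite E mulmxDr h0P add0r mulmx_sumr.
  rewrite (eq_bigr (fun _ => - u)%R); last first.
    by move=> y Py; rewrite mulmxBr hC // mulmx1 sub0r.
  by rewrite sumr_const mulNrn.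
rewrite h0F => /esym /eqP; rewrite oppr_eq0 -scaler_nat scaler_eq0 (negbTE nzu) orbF.
rewrite -val_eqE /= val_Fp_nat // => /eqP.
by move/eqP; rewrite -/(dvdn r #|P|) (negbTE rP).
Qed.

End Fpf.
Section Core.
Variables (gT : finGroupType) (G Ka Ha Kb Hb : {group gT}).
Hypotheses (frA : [Frobenius G = Ka ><| Ha]) (frB : [Frobenius G = Kb ><| Hb]).

Lemma sylow_nt (p : nat) (B P : {group gT}) :
  prime p -> p %| #|B| -> p.-Sylow(B) P -> P :!=: 1.
Proof.
move=> pr dv sylP; rewrite -cardG_gt1 (card_Hall sylP) p_part_gt1.
by rewrite mem_primes pr cardG_gt0.
Qed.

Lemma core_contra c : Ka \proper Kb -> c \in Ha -> c \in Hb -> c != 1 -> False.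
Proof.
move=> ltAB Hac Hbc ntc.
have [defA ntKa ntHa ltKaG ltHaG] := Frobenius_context frA.
have [defB ntKb ntHb ltKbG ltHbG] := Frobenius_context frB.
have [nsKaG sHaG mulA nKaHa tiA] := sdprod_context defA.
have [nsKbG sHbG mulB nKbHb tiB] := sdprod_context defB.
have sKaKb := proper_sub ltAB.
pose B := (Ha :&: Kb)%G.
have defKb : Ka * B = Kb.
  by rewrite /= group_modl // mulA (setIidPr (normal_sub nsKbG)).
have ntB : B :!=: 1.
  apply: contraTneq ltAB => B1; rewrite properEneq negb_and negbK.
  by apply/orP; left; apply/eqP; rewrite -defKb B1 mulg1.
pose C := <[c]>%G.
have sCHa : C \subset Ha by rewrite cycle_subG.
have sCHb : C \subset Hb by rewrite cycle_subG.
have sCG : C \subset G := subset_trans sCHa sHaG.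
have nBC : C \subset 'N(B).
  apply: normsI; first exact: subset_trans sCHa (normG _).
  exact: subset_trans sCG (normal_norm nsKbG).
have coKbHb := Frobenius_coprime frB.
have coKaHa := Frobenius_coprime frA.
have sBKb : B \subset Kb := subsetIr _ _.
have sBHa : B \subset Ha := subsetIl _ _.
have coBC : coprime #|B| #|C|.
  exact: coprimeSg sBKb (coprimegS sCHb coKbHb).
pose p := pdiv #|B|.
have p_pr : prime p by rewrite pdiv_prime // cardG_gt1.
have solC : solvable C := abelian_sol (cycle_abelian c).
have [P sylP nPC] := sol_coprime_Sylow_exists p solC nBC coBC.
have ntP : P :!=: 1 := sylow_nt p_pr (pdiv_dvd _) sylP.
have sPB : P \subset B := pHall_sub sylP.
pose F := (P <*> C)%G.
have sFHa : F \subset Ha by rewrite join_subG (subset_trans sPB sBHa) sCHa.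
have coKaF : coprime #|Ka| #|F| := coprimegS sFHa coKaHa.
have nsPF : P <| F.
  by rewrite /normal joing_subl join_subG normG nPC.
have solF : solvable F.
  rewrite (series_sol nsPF) (pgroup_sol (pHall_pgroup sylP)) /=.
  by rewrite quotientYidl // quotient_sol.
have nKaF : F \subset 'N(Ka) := subset_trans (subset_trans sFHa sHaG) (normal_norm nsKaG).
pose r := pdiv #|Ka|.
have r_pr : prime r by rewrite pdiv_prime // cardG_gt1.
have [R sylR nRF] := sol_coprime_Sylow_exists r solF nKaF coKaF.
have ntR : R :!=: 1 := sylow_nt r_pr (pdiv_dvd _) sylR.
have rR : r.-group R := pHall_pgroup sylR.
pose V := 'Ohm_1('Z(R))%G.
have abelV : r.-abelem V.
  exact: Ohm1_abelem (pgroupS (center_sub R) rR) (center_abelian R).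
have ntV : V :!=: 1.
  rewrite /= Ohm1_eq1; apply: contra ntR => /eqP Z1.
  by apply/eqP; apply: (trivg_center_pgroup rR).
have nVF : F \subset 'N(V).
  apply: char_norm_trans nRF; apply: char_trans (center_char R).
  exact: Ohm_char.
have sVKa : V \subset Ka.
  apply: subset_trans (pHall_sub sylR).
  exact: subset_trans (Ohm_sub 1 _) (center_sub R).
have regA := Frobenius_reg_ker frA.
have regB := Frobenius_reg_ker frB.
apply: (fpf_contra abelV ntV nVF nPC).
- exact: coprime_TIg (coprimeSg sPB coBC).
- exact: ntP.
- by rewrite cycle_eq1.
- move=> x Fx ntx; apply/trivgP.
  rewrite -(regA x); first by rewrite setSI.
  by rewrite !inE ntx (subsetP sFHa).
- move=> x Cx ntx; apply/trivgP.
  rewrite -(regB x); first by rewrite setSI // (subset_trans sPB sBKb).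
  by rewrite !inE ntx (subsetP sCHb).
- rewrite -prime_coprime //.
  apply: coprime_dvdl (pdiv_dvd #|Ka|) _.
  exact: coprimegS (subset_trans sPB sBHa) coKaHa.
Qed.

End Core.

Lemma no_proper (gT : finGroupType) (G Ka Ha Kb Hb : {group gT}) :
  [Frobenius G = Ka ><| Ha] -> [Frobenius G = Kb ><| Hb] -> Ka \proper Kb -> False.
Proof.
move=> frA frB ltAB.
have [defA ntKa ntHa ltKaG ltHaG] := Frobenius_context frA.
have [defB ntKb ntHb ltKbG ltHbG] := Frobenius_context frB.
have [nsKaG sHaG mulA nKaHa tiA] := sdprod_context defA.
have [nsKbG sHbG mulB nKbHb tiB] := sdprod_context defB.
pose q := pdiv #|Hb|.
have q_pr : prime q by rewrite pdiv_prime // cardG_gt1.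
have [c Hbc oc] := Cauchy q_pr (pdiv_dvd #|Hb|).
have Gc : c \in G := subsetP sHbG c Hbc.
have qC : q.-group <[c]> by rewrite /pgroup -orderE oc pnat_id.
have actC : [acts <[c]>, on Ha :^: G | 'Js].
  rewrite -orbitJs; apply: subset_trans (acts_orbit _ _ (subsetT G)).
  by rewrite cycle_subG.
have NHa : 'N_G(Ha) = Ha.
  have /andP[_ /and3P[_ _ /eqP]] := FrobeniusWcompl frA.
  by rewrite normD1.
have cardHaG : #|Ha :^: G| = #|Ka|.
  rewrite card_conjugates NHa.
  apply/eqP; rewrite -(eqn_pmul2l (cardG_gt0 Ha)) Lagrange //.
  by rewrite mulnC (sdprod_card defA).
have coKaHb : coprime #|Ka| #|Hb|.
  exact: coprimeSg (proper_sub ltAB) (Frobenius_coprime frB).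
have := pgroup_fix_mod qC actC; rewrite cardHaG.
have [/eqP F0 | /set0Pn[Y FixY]] := boolP ('Fix_(Ha :^: G | 'Js)(<[c]>) == set0).
  rewrite F0 cards0 mod0n => /eqP; rewrite -/(dvdn q #|Ka|) => qKa.
  have : coprime q #|Ka|.
    rewrite coprime_sym; apply: coprimeSg (subxx _) _ => //.
    exact: coprime_dvdr (pdiv_dvd _) coKaHb.
  by rewrite prime_coprime // qKa.
move=> _.
move: FixY; rewrite inE => /andP[/imsetP[g Gg ->{Y}] /afixP fixc].
have cN : c \in 'N_G(Ha :^ g).
  by rewrite inE Gc; apply/normP; apply: (fixc c (cycle_id c)).
have Hagc : c \in Ha :^ g.
  by move: cN; rewrite normJ -{1}(conjGid Gg) -conjIg NHa.
have frA' : [Frobenius G = Ka ><| (Ha :^ g)%G].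
  have := FrobeniusJ g G Ka Ha; rewrite frA /= (conjGid Gg).
  by rewrite (normsP (normal_norm nsKaG)).
have ntc : c != 1.
  apply/eqP => c1; move: oc; rewrite c1 order1 => q1.
  by rewrite -q1 in q_pr.
exact: (core_contra frA' frB ltAB Hagc Hbc ntc).
Qed.

Lemma frob_dichotomy (gT : finGroupType) (G K H N : {group gT}) :
  [Frobenius G = K ><| H] -> N <| G -> N \subset K \/ K \subset N.
Proof.
move=> frG nsNG.
have [defG ntK ntH ltKG ltHG] := Frobenius_context frG.
have [nsKG sHG mulKH nKH tiKH] := sdprod_context defG.
have [sNG nNG] := andP nsNG.
have [sKG nKG] := andP nsKG.
have [sNK | /subsetPn[x Nx Kx']] := boolP (N \subset K); [by left | right].
have Gx : x \in G := subsetP sNG x Nx.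
have partG := Frobenius_partition frG.
have := Gx; rewrite -(cover_partition partG).
case/bigcupP=> Y; rewrite !inE => /orP[/eqP -> | ]; first by rewrite (negbTE Kx').
case/imsetP=> k Kk -> xHk.
pose y := x ^ k^-1.
have Hy : y \in H^# by rewrite /y -mem_conjg.
have Gk : k \in G := subsetP sKG k Kk.
have Ny : y \in N by rewrite /y memJ_norm ?groupV ?(subsetP nNG).
have Gy : y \in G by rewrite (subsetP sNG).
have regy := Frobenius_reg_ker frG Hy.
pose f := fun a => [~ a, y].
have injf : {in K &, injective f}.
  move=> a b Ka Kb; rewrite /f !commgEl => E.
  have e2 : b ^ y = b * (a^-1 * a ^ y) by rewrite E mulKVg.
  have : b * a^-1 \in 'C_K[y].
    rewrite inE groupM ?groupV //; apply/cent1P/commgP/conjg_fixP.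
    by rewrite conjMg conjVg e2 mulgA mulgK.
  rewrite regy => /set1P/eqP; rewrite mulg_eq1 invgK => /eqP //.
have sfK : f @: K \subset K :&: N.
  apply/subsetP=> _ /imsetP[a Ka ->]; rewrite inE /f; apply/andP; split.
    by rewrite commgEl groupM ?groupV // memJ_norm // (subsetP nKG).
  by rewrite commgEr groupM // memJ_norm ?groupV // (subsetP nNG) // (subsetP sKG).
have : K :&: N = K.
  apply/eqP; rewrite eqEcard subsetIl /=.
  by rewrite -{1}(card_in_imset injf) subset_leq_card.
by move/setIidPl.
Qed.

Lemma frob_ker_uniq (gT : finGroupType) (G K1 H1 K2 H2 : {group gT}) :
  [Frobenius G = K1 ><| H1] -> [Frobenius G = K2 ><| H2] -> K1 :=: K2.
Proof.
move=> fr1 fr2.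
have [def2 _ _ _ _] := Frobenius_context fr2.
have [nsK2 _ _ _ _] := sdprod_context def2.
have [s21 | s12] := frob_dichotomy fr1 nsK2.
  apply/eqP; rewrite eq_sym eqEproper s21 /=; apply/negP => lt.
  exact: no_proper fr2 fr1 lt.
apply/eqP; rewrite eqEproper s12 /=; apply/negP => lt.
exact: no_proper fr1 fr2 lt.
Qed.

Theorem theorem11 (n : nat) (G H : {group {perm 'I_n}}) :
  frobenius_perm G -> frobenius_complement G H ->
  exists P : {set {set {perm 'I_n}}},
    [/\ partition P G, #|P| = #|H|,
        (forall B, B \in P -> #|B| = n)
      & forall s t, s \in G -> t \in G ->
          derangement_adj s t = (s != t) && (pblock P s == pblock P t)].
Proof.
case=> trG fixG [g0 Gg0 /andP[ntg0 /set0Pn[u fu]]].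
pose H0 := 'C_G[u | 'P]%G.
have fixE x : 'Fix_([set: 'I_n] | 'P)[x] = fixpts x.
  apply/setP=> i; rewrite !inE sub1set inE.
  by [].

have frAct : Frobenius_action G H0 [set: 'I_n] 'P.
  split=> //.
  - apply/subsetP=> x /setIP[Gx /astabP cx]; apply/set1P/permP=> i.
    by rewrite perm1; exact: (cx i (in_setT i)).
  - move=> x /setD1P[ntx Gx]; rewrite fixE; exact: fixG.
  - apply/trivgPn; exists g0 => //; rewrite inE Gg0; apply/astab1P.
    by move: fu; rewrite inE => /eqP.
  - by exists u; rewrite ?in_setT.
have frH0 : [Frobenius G with complement H0].
  by apply/Frobenius_actionP; apply: hasFrobeniusAction frAct.
have [K0 frK0] := Frobenius_kernel_exists frH0.
have [defK0 _ _ _ _] := Frobenius_context frK0.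
have K0E := Frobenius_action_kernel_def defK0 frAct.
case=> ltHG ntH tiH.
have sHG := proper_sub ltHG.
have frH : [Frobenius G with complement H].
  apply/andP; split.
    by apply: contraTneq ltHG => ->; rewrite properxx.
  apply/normedTI_P; split.
  - by rewrite setD_eq0 subG1.
  - by rewrite subsetI sHG normD1 normG.
  move=> g Gg; apply: contraR => Hg'.
  rewrite -setI_eq0 conjD1g -setDIl tiH ?setDv //.
  by rewrite inE Hg' Gg.
have [K1 frK1] := Frobenius_kernel_exists frH.
have K10 : K1 :=: K0 := frob_ker_uniq frK1 frK0.
have [nsK0G _ _ _ _] := sdprod_context defK0.
have sK0G := normal_sub nsK0G.
have [defK1 _ _ _ _] := Frobenius_context frK1.
have oH0 : #|G : H0| = n.
  by rewrite -card_orbit (atransP trG u (in_setT u)) cardsT card_ord.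
have oK0 : #|K0| = n.
  apply: (etrans _ oH0); apply/eqP; rewrite -(eqn_pmul2l (cardG_gt0 H0)) Lagrange ?subsetIl //.
  by rewrite mulnC (sdprod_card defK0).
have oGK0 : #|G : K0| = #|H|.
  apply/eqP; rewrite -(eqn_pmul2l (cardG_gt0 K0)) Lagrange //.
  by rewrite -K10 (sdprod_card defK1).
have partP := rcosets_partition sK0G.
have tiP : trivIset (rcosets K0 G) by case/and3P: partP.
have pbE s : s \in G -> pblock (rcosets K0 G) s = K0 :* s.
  move=> Gs; apply: def_pblock => //; last exact: rcoset_refl.
  by apply/rcosetsP; exists s.
exists (rcosets K0 G); split => //.
  by move=> B /rcosetsP[g _ ->]; rewrite card_rcoset.
move=> s t Gs Gt; rewrite !pbE //.
have -> : (K0 :* s == K0 :* t) = (s * t^-1 \in K0).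
  by apply/eqP/idP => [/rcoset_eqP | E]; rewrite -?mem_rcoset //; apply/rcoset_eqP; rewrite mem_rcoset.
rewrite /derangement_adj eq_mulgV1.
have Gx : s * t^-1 \in G by rewrite groupM ?groupV.
move: (s * t^-1) Gx => x Gx.
have [-> | ntx] := eqVneq x 1.
  apply/forallP => /(_ u); by rewrite perm1 eqxx.
rewrite /= K0E !inE (negbTE ntx) Gx /= fixE.
apply/forallP/eqP => [nf | f0 i].
  by apply/setP => i; rewrite !inE (negbTE (nf i)).
apply/negP => /eqP xi.
have : i \in fixpts x by rewrite inE xi.
by rewrite f0 inE.
Qed.
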